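(* Assume $L/F$ is unramified. If $\Phi\in\pi_{\tau,\chi}^{K_n}$ with $n\ge1$, then $\operatorname{supp}(\Phi)\subset\mathfrak p_L^{\lceil(c-n)/2\rceil}$ and $\Phi$ is constant on cosets of $\mathfrak p_L^{\,c-\lceil(c-n)/2\rceil}$.
   Context: $F$ is a $p$-adic field with $p\ne2$, ring of integers $\mathcal O$ with maximal ideal $\mathfrak p$, residue field of order $q$. $L/F$ is a quadratic extension with ring of integers $\mathcal O_L$, maximal ideal $\mathfrak p_L$, conjugation $x\mapsto\overline x$, norm $N:L\to F$, $L^1=\ker N$; $\omega$ is the nontrivial character of $F^\times/N(L^\times)$. $\chi$ is a character of $L^\times$ not factoring through $N$. $\tau$ is a nontrivial additive character of $F$ with conductor $\mathfrak p^c$, i.e. $\tau$ is trivial on $\mathfrak p^m$ iff $m\ge c$. Put $\langle x,y\rangle=\tau(\operatorname{tr}_{L/F}(xy))$ and $\widehat\Phi(x)=\int_L\Phi(y)\langle x,y\rangle\,dy$ for Schwartz functions $\Phi$ on $L$, with Haar measure normalized so that $\widehat{\widehat\Phi}(x)=\Phi(-x)$. $\mathcal S(L)_\chi$ is the space of Schwartz functions with $\Phi(xy)=\chi(y)^{-1}\Phi(x)$ for $y\in L^1$. $G_+=\{g\in GL_2(F):\det g\in N(L^\times)\}$, and $\pi_{\tau,\chi}$ is the irreducible representation of $G_+$ on $\mathcal S(L)_\chi$ satisfying $\pi_{\tau,\chi}\begin{pmatrix}1&u\\0&1\end{pmatrix}\Phi(x)=\tau(uN(x))\Phi(x)$, $\pi_{\tau,\chi}\begin{pmatrix}a&0\\0&a^{-1}\end{pmatrix}\Phi(x)=\omega(a)|a|_L^{1/2}\Phi(ax)$,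 $\pi_{\tau,\chi}\begin{pmatrix}0&1\\-1&0\end{pmatrix}\Phi(x)=\gamma\widehat\Phi(\overline x)$ for some complex $\gamma$ with $|\gamma|=1$. $K_n$ is the principal congruence subgroup of $GL_2(F)$ of level $n$ (contained in $G_+$ for $n\ge1$). *)

(* Defs.v *)
From HB Require Import structures.
From mathcomp Require Import all_boot all_order all_algebra all_field.
Set Implicit Arguments. Unset Strict Implicit. Unset Printing Implicit Defensive.
Import Order.TTheory GRing.Theory Num.Theory.
Local Open Scope ring_scope.

(* The base field F with its normalized discrete valuation v : F -> int *)
(* (the value v 0 is irrelevant: 0 lies in every power of the ideal).  *)

Definition inPow (F : fieldType) (v : F -> int) (m : int) (x : F) : bool :=
  (x == 0) || (m <= v x).

Definition is_pAdic_field (F : fieldType) (v : F -> int) (p q : nat) : Prop :=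
  (forall x y : F, x != 0 -> y != 0 -> v (x * y) = v x + v y) /\
  (forall x y : F, x != 0 -> y != 0 -> x + y != 0 ->
          (v x <= v (x + y)) || (v y <= v (x + y))) /\
  (exists w : F, w != 0 /\ v w = 1) /\
  (forall u : nat -> F,
          (forall m : int, exists N : nat, forall i j : nat, (N <= i)%N -> (N <= j)%N ->
               inPow v m (u i - u j)) ->
          exists l : F, forall m : int, exists N : nat, forall i : nat, (N <= i)%N ->
               inPow v m (u i - l)) /\
  (forall k : nat, (0 < k)%N -> (k%:R : F) != 0) /\
      (* residue field O/p has characteristic p, p prime, p <> 2 *)
  [/\ prime p, p != 2%N & inPow v 1 (p%:R : F)] /\
      (* residue field O/p has exactly q elements *)
      (exists s : seq F,
          [/\ size s = q,
              (forall i, (i < q)%N -> inPow v 0 (nth 0 s i)),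
              (forall i j, (i < q)%N -> (j < q)%N -> i != j ->
                   ~~ inPow v 1 (nth 0 s i - nth 0 s j))
            & (forall x, inPow v 0 x -> exists2 i, (i < q)%N & inPow v 1 (x - nth 0 s i))]).

Definition is_quad_ext (F : fieldType) (L : fieldExtType F) (sig : L -> L)
    (nF tF : L -> F) : Prop :=
  \dim {:L} = 2%N /\
  [/\ (forall x y, sig (x + y) = sig x + sig y),
      (forall x y, sig (x * y) = sig x * sig y),
      (forall a : F, sig (a%:A) = a%:A),
      (forall x, sig (sig x) = x)
    & (exists x, sig x != x)] /\
  (forall x, (nF x)%:A = x * sig x) /\
  (forall x, (tF x)%:A = x + sig x).

(* The valuation of F extends to L by w(x) = v(N x)/2; L/F is unramified
   (ramification index 1) iff w takes integer values on L^x. *)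
Definition unramified (F : fieldType) (L : fieldExtType F) (v : F -> int)
    (nF : L -> F) : Prop :=
  forall x : L, x != 0 -> (2 %| v (nF x))%Z.

(* x \in p_L^k, for L/F unramified (so v_L(x) = v(N x)/2) *)
Definition inPowL (F : fieldType) (L : fieldExtType F) (v : F -> int)
    (nF : L -> F) (k : int) (x : L) : bool :=
  (x == 0) || (2 * k <= v (nF x)).

Definition schwartz (F : fieldType) (L : fieldExtType F) (v : F -> int)
    (nF : L -> F) (C : numClosedFieldType) (Phi : L -> C) : Prop :=
  (exists k : int, forall x y : L, inPowL v nF k (x - y) -> Phi x = Phi y) /\
  (exists k : int, forall x : L, Phi x != 0 -> inPowL v nF k x).

Definition haar_integral (F : fieldType) (L : fieldExtType F) (v : F -> int)
    (nF : L -> F) (C : numClosedFieldType) (I : (L -> C) -> C) : Prop :=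
  [/\ (forall f g, schwartz v nF f -> schwartz v nF g ->
          I (fun x => f x + g x) = I f + I g),
      (forall (a : C) f, schwartz v nF f -> I (fun x => a * f x) = a * I f),
      (forall (a : L) f, schwartz v nF f -> I (fun x => f (x + a)) = I f)
    & 0 < I (fun x => if inPowL v nF 0 x then 1 else 0)].

Definition fourier (F : fieldType) (L : fieldExtType F) (C : numClosedFieldType)
    (tau : F -> C) (tF : L -> F) (I : (L -> C) -> C) (Phi : L -> C) : L -> C :=
  fun x => I (fun y => Phi y * tau (tF (x * y))).

Definition self_dual (F : fieldType) (L : fieldExtType F) (v : F -> int)
    (nF tF : L -> F) (C : numClosedFieldType) (tau : F -> C) (I : (L -> C) -> C) : Prop :=
  forall Phi, schwartz v nF Phi ->
    forall x, fourier tau tF I (fourier tau tF I Phi) x = Phi (- x).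

Definition add_char_conductor (F : fieldType) (v : F -> int) (C : numClosedFieldType)
    (tau : F -> C) (c : int) : Prop :=
  (forall x y, tau (x + y) = tau x * tau y) /\
  (forall m : int, (forall x, inPow v m x -> tau x = 1) <-> c <= m).

Definition omega_char (F : fieldType) (L : fieldExtType F) (nF : L -> F)
    (C : numClosedFieldType) (omega : F -> C) : Prop :=
  [/\ (forall a b : F, a != 0 -> b != 0 -> omega (a * b) = omega a * omega b),
      omega 1 = 1,
      (forall y : L, y != 0 -> omega (nF y) = 1)
    & (exists a : F, a != 0 /\ omega a != 1)].

Definition char_not_via_norm (F : fieldType) (L : fieldExtType F) (v : F -> int)
    (nF : L -> F) (C : numClosedFieldType) (chi : L -> C) : Prop :=
  [/\ (forall x y : L, x != 0 -> y != 0 -> chi (x * y) = chi x * chi y),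
      chi 1 = 1,
      (exists k : int, (0 < k) /\ forall u : L, inPowL v nF k (u - 1) -> chi u = 1)
    & ~ (exists mu : F -> C, forall x : L, x != 0 -> chi x = mu (nF x))].

Definition S_chi (F : fieldType) (L : fieldExtType F) (v : F -> int)
    (nF : L -> F) (C : numClosedFieldType) (chi : L -> C) (Phi : L -> C) : Prop :=
  schwartz v nF Phi /\
  (forall x y : L, nF y = 1 -> Phi (x * y) = (chi y)^-1 * Phi x).

Definition mx2 (F : fieldType) (a b c d : F) : 'M[F]_2 :=
  \matrix_(i < 2, j < 2)
    if i == 0 then (if j == 0 then a else b) else (if j == 0 then c else d).

Definition in_Gplus (F : fieldType) (L : fieldExtType F) (nF : L -> F)
    (g : 'M[F]_2) : Prop :=
  \det g != 0 /\ exists y : L, y != 0 /\ \det g = nF y.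

Definition in_Kn (F : fieldType) (v : F -> int) (n : nat) (g : 'M[F]_2) : Prop :=
  [/\ forall i j, inPow v 0 (g i j),
      \det g != 0, v (\det g) = 0
    & forall i j, inPow v n%:Z ((g - 1%:M) i j)].

Definition weil_rep (F : fieldType) (v : F -> int) (q : nat) (L : fieldExtType F)
    (sig : L -> L) (nF tF : L -> F) (C : numClosedFieldType)
    (omega tau : F -> C) (chi : L -> C) (I : (L -> C) -> C) (gamma : C)
    (pi : 'M[F]_2 -> (L -> C) -> (L -> C)) : Prop :=
  [/\
      (forall g Phi, in_Gplus nF g -> S_chi v nF chi Phi -> S_chi v nF chi (pi g Phi)),
      (forall g Phi Psi, in_Gplus nF g -> S_chi v nF chi Phi -> S_chi v nF chi Psi ->
          pi g (fun x => Phi x + Psi x) = (fun x => pi g Phi x + pi g Psi x))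
    & (forall g (a : C) Phi, in_Gplus nF g -> S_chi v nF chi Phi ->
          pi g (fun x => a * Phi x) = (fun x => a * pi g Phi x))] /\
  (
      (forall Phi, S_chi v nF chi Phi -> pi 1%:M Phi = Phi) /\
      (forall g h Phi, in_Gplus nF g -> in_Gplus nF h -> S_chi v nF chi Phi ->
          pi (g *m h) Phi = pi g (pi h Phi))) /\
  [/\
      (forall (u : F) Phi, S_chi v nF chi Phi ->
          pi (mx2 1 u 0 1) Phi = (fun x => tau (u * nF x) * Phi x)),
      (forall (a : F) Phi, a != 0 -> S_chi v nF chi Phi ->
          pi (mx2 a 0 0 a^-1) Phi =
          (fun x => omega a * (q%:R : C) ^ (- v a) * Phi (a *: x)))
    & (forall Phi, S_chi v nF chi Phi ->
          pi (mx2 0 1 (-1) 0) Phi = (fun x => gamma * fourier tau tF I Phi (sig x)))].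

Definition ceil_half (z : int) : int := ((z + 1) %/ 2)%Z.

(* Main.v *)
Require Import Defs.
From HB Require Import structures.
From mathcomp Require Import all_boot all_order all_algebra all_field.
From mathcomp Require Import zify ring.
From Stdlib Require Import FunctionalExtensionality.
Import Order.TTheory GRing.Theory Num.Theory.
Local Open Scope ring_scope.
Set Implicit Arguments. Unset Strict Implicit.

Lemma det_mx2 (F : fieldType) (a b c d : F) : \det (mx2 a b c d) = a * d - b * c.
Proof.
rewrite (expand_det_row _ 0) !big_ord_recl big_ord0 /cofactor !det_mx11 !mxE /=.
rewrite /bump /= !add0n addn0 expr0 expr1; ring.
Qed.

Lemma mx2M (F : fieldType) (a b c d a' b' c' d' : F) :
  mx2 a b c d *m mx2 a' b' c' d' =
  mx2 (a * a' + b * c') (a * b' + b * d') (c * a' + d * c') (c * b' + d * d').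
Proof.
apply/matrixP => i j; rewrite !mxE !big_ord_recl big_ord0 !mxE.
case: i => [[|[|//]] Hi]; case: j => [[|[|//]] Hj]; rewrite /= ?addr0 //.
Qed.

Lemma mx2_entries (F : fieldType) (a b c d : F) (P : F -> Prop) :
  P a -> P b -> P c -> P d -> forall i j, P (mx2 a b c d i j).
Proof.
by move=> ha hb hc hd [[|[|//]] Hi] [[|[|//]] Hj]; rewrite mxE.
Qed.

Lemma mx2_sub1 (F : fieldType) (a b c d : F) :
  mx2 a b c d - 1%:M = mx2 (a - 1) b c (d - 1).
Proof.
apply/matrixP => i j; rewrite !mxE.
by case: i => [[|[|//]] Hi]; case: j => [[|[|//]] Hj]; rewrite /= ?subr0.
Qed.



Lemma vone (F : fieldType) (v : F -> int) :
  (forall x y : F, x != 0 -> y != 0 -> v (x * y) = v x + v y) -> v 1 = 0.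
Proof. move=> vM; have := vM 1 1 (oner_neq0 _) (oner_neq0 _); rewrite mulr1; lia. Qed.

Lemma vNone (F : fieldType) (v : F -> int) :
  (forall x y : F, x != 0 -> y != 0 -> v (x * y) = v x + v y) -> v (-1) = 0.
Proof.
move=> vM; have n1 : (-1 : F) != 0 by rewrite oppr_eq0 oner_neq0.
have := vM _ _ n1 n1; rewrite mulrNN mulr1 (vone vM); lia.
Qed.

Lemma vopp (F : fieldType) (v : F -> int) :
  (forall x y : F, x != 0 -> y != 0 -> v (x * y) = v x + v y) ->
  forall x, x != 0 -> v (- x) = v x.
Proof.
move=> vM x x0; have n1 : (-1 : F) != 0 by rewrite oppr_eq0 oner_neq0.
by rewrite -mulN1r vM // (vNone vM) add0r.
Qed.

Definition vmul (F : fieldType) (v : F -> int) :=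
  forall x y : F, x != 0 -> y != 0 -> v (x * y) = v x + v y.
Definition vultra (F : fieldType) (v : F -> int) :=
  forall x y : F, x != 0 -> y != 0 -> x + y != 0 ->
          (v x <= v (x + y)) || (v y <= v (x + y)).
Definition vcomplete (F : fieldType) (v : F -> int) :=
  forall u : nat -> F,
          (forall m : int, exists N : nat, forall i j : nat, (N <= i)%N -> (N <= j)%N ->
               inPow v m (u i - u j)) ->
          exists l : F, forall m : int, exists N : nat, forall i : nat, (N <= i)%N ->
               inPow v m (u i - l).

Lemma inPow0 (F : fieldType) (v : F -> int) m : inPow v m 0.
Proof. by rewrite /inPow eqxx. Qed.

Lemma inPowW (F : fieldType) (v : F -> int) m m' x : m' <= m -> inPow v m x -> inPow v m' x.
Proof. rewrite /inPow => h /orP [->//|h2]; apply/orP; right; lia. Qed.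

Lemma inPowD (F : fieldType) (v : F -> int) m x y : vultra v ->
  inPow v m x -> inPow v m y -> inPow v m (x + y).
Proof.
rewrite /inPow => vU /orP [/eqP->|hx]; first by rewrite add0r.
move=> /orP [/eqP->|hy]; first by rewrite addr0 hx orbT.
case: (eqVneq x 0) => [->|x0]; first by rewrite add0r hy orbT.
case: (eqVneq y 0) => [->|y0]; first by rewrite addr0 hx orbT.
case: (eqVneq (x + y) 0) => [->|s0] //=.
move: (vU _ _ x0 y0 s0) => /orP [] h; lia.
Qed.

Lemma inPowN (F : fieldType) (v : F -> int) m x : vmul v -> inPow v m x -> inPow v m (- x).
Proof.
rewrite /inPow => vM /orP [/eqP->|hx]; first by rewrite oppr0 eqxx.
case: (eqVneq x 0) => [->|x0]; first by rewrite oppr0 eqxx.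
by rewrite (vopp vM x0) hx orbT.
Qed.

Lemma inPowB (F : fieldType) (v : F -> int) m x y : vmul v -> vultra v ->
  inPow v m x -> inPow v m y -> inPow v m (x - y).
Proof. by move=> vM vU hx hy; apply: inPowD => //; apply: inPowN. Qed.

Lemma inPowM (F : fieldType) (v : F -> int) m a b x y : vmul v -> m <= a + b ->
  inPow v a x -> inPow v b y -> inPow v m (x * y).
Proof.
rewrite /inPow => vM hm /orP [/eqP->|hx]; first by rewrite mul0r eqxx.
move=> /orP [/eqP->|hy]; first by rewrite mulr0 eqxx.
case: (eqVneq x 0) => [->|x0]; first by rewrite mul0r eqxx.
case: (eqVneq y 0) => [->|y0]; first by rewrite mulr0 eqxx.
rewrite mulf_eq0 (negbTE x0) (negbTE y0) /= vM //; lia.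
Qed.

Lemma inPow_all0 (F : fieldType) (v : F -> int) x : (forall m, inPow v m x) -> x = 0.
Proof.
move=> h; case: (eqVneq x 0) => // x0; move: (h (v x + 1)).
rewrite /inPow (negbTE x0) /=; lia.
Qed.

Definition hseq (F : fieldType) (eps : F) (k : nat) : F :=
  iter k (fun x => x ^+ 2 + eps) 0.

Lemma hseqS (F : fieldType) (eps : F) k : hseq eps k.+1 = hseq eps k ^+ 2 + eps.
Proof. by []. Qed.

Lemma hensel (F : fieldType) (v : F -> int) eps : vmul v -> vultra v -> vcomplete v ->
  inPow v 1 eps -> exists r, r ^+ 2 + eps = r.
Proof.
move=> vM vU vC he.
have r1 : forall k, inPow v 1 (hseq eps k).
  elim=> [|k IH]; first exact: inPow0.
  rewrite hseqS; apply: inPowD => //; rewrite expr2; apply: (inPowM (a:=1) (b:=1)) => //.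
have rd : forall k, inPow v k.+1%:Z (hseq eps k.+1 - hseq eps k).
  elim=> [|k IH]; first by rewrite hseqS /hseq /= expr2 mul0r add0r subr0.
  have -> : hseq eps k.+2 - hseq eps k.+1 =
     (hseq eps k.+1 - hseq eps k) * (hseq eps k.+1 + hseq eps k).
    by rewrite (hseqS eps k.+1) {2}(hseqS eps k); ring.
  apply: (inPowM (a := k.+1%:Z) (b := 1)) => //; first lia.
  exact: inPowD.
have rc : forall N d, inPow v N.+1%:Z (hseq eps (N + d) - hseq eps N).
  move=> N; elim=> [|d IH]; first by rewrite addn0 subrr inPow0.
  have -> : hseq eps (N + d.+1) - hseq eps N =
     (hseq eps (N + d).+1 - hseq eps (N + d)) + (hseq eps (N + d) - hseq eps N).
    by rewrite addnS; ring.
  apply: inPowD => //; apply: inPowW (rd _); lia.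
have [l hl] : exists l, forall m : int, exists N : nat, forall i : nat, (N <= i)%N ->
               inPow v m (hseq eps i - l).
  apply: vC => m; exists `|m|%N => i j hi hj.
  have -> : hseq eps i - hseq eps j =
    (hseq eps (`|m|%N + (i - `|m|)) - hseq eps `|m|%N) -
    (hseq eps (`|m|%N + (j - `|m|)) - hseq eps `|m|%N).
    by rewrite !subnKC //; ring.
  apply: inPowB => //; apply: inPowW (rc _ _); lia.
exists l; apply/eqP; rewrite -subr_eq0; apply/eqP; apply: inPow_all0 => m.
have [N hN] := hl `|m|%:Z.
have -> : l ^+ 2 + eps - l = (l - hseq eps N) * (l + hseq eps N)
   + (hseq eps N.+1 - l).
  by rewrite hseqS; ring.
apply: inPowW (_ : m <= `|m|%:Z) _; first lia.
apply: inPowD => //; last exact: hN.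
  exact: vU.
have h1 : inPow v `|m|%:Z (l - hseq eps N).
  have -> : l - hseq eps N = - (hseq eps N - l) by ring.
  by apply: inPowN => //; apply: hN.
apply: (@inPowM _ _ _ (`|m|%:Z) 0 _ _ vM _ h1); first lia.
have h0 : inPow v 0 (l - hseq eps N) by apply: inPowW h1; lia.
have hr : inPow v 0 (hseq eps N) by apply: inPowW (r1 N); lia.
have -> : l + hseq eps N = (l - hseq eps N) + hseq eps N + hseq eps N by ring.
exact: (inPowD vU (inPowD vU h0 hr) hr).
Qed.

Lemma alg_inj (F : fieldType) (L : fieldExtType F) (a b : F) :
  a%:A = b%:A :> L -> a = b.
Proof.
move/eqP; rewrite -subr_eq0 -scalerBl scaler_eq0 oner_eq0 orbF subr_eq0.
by move/eqP.
Qed.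

Lemma alg_mul (F : fieldType) (L : fieldExtType F) (a b : F) :
  (a * b)%:A = a%:A * b%:A :> L.
Proof. by rewrite -scalerAl mul1r scalerA. Qed.

Lemma alg_add (F : fieldType) (L : fieldExtType F) (a b : F) :
  (a + b)%:A = a%:A + b%:A :> L.
Proof. by rewrite scalerDl. Qed.

Lemma sig0 (F : fieldType) (L : fieldExtType F) (sig : L -> L) :
  (forall x y, sig (x + y) = sig x + sig y) -> sig 0 = 0.
Proof. move=> hsD; have h := hsD 0 0; rewrite addr0 in h. by apply: (@addrI _ (sig 0)); rewrite addr0 -h. Qed.

Lemma trace_val (F : fieldType) (v : F -> int) (L : fieldExtType F) (sig : L -> L)
    (nF tF : L -> F) :
  vmul v -> vultra v -> vcomplete v -> (1 + 1 : F) != 0 ->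
  (forall x y, sig (x + y) = sig x + sig y) ->
  (forall a : F, sig (a%:A) = a%:A) ->
  (forall x, sig (sig x) = x) ->
  (forall x, (nF x)%:A = x * sig x) ->
  (forall x, (tF x)%:A = x + sig x) ->
  forall w c0, w != 0 -> 2 * c0 <= v (nF w) -> inPow v c0 (tF w).
Proof.
move=> vM vU vC h2 hsD hsA hss hN hT w c0 w0 hv.
rewrite /inPow; case: (eqVneq (tF w) 0) => //= t0.
rewrite leNgt; apply/negP => ht.
have sw0 : sig w != 0.
  by apply: contra w0 => /eqP h; rewrite -(hss w) h (sig0 hsD).
have N0 : nF w != 0.
  apply/negP => /eqP h; have := hN w; rewrite h scale0r => /eqP.
  by rewrite eq_sym mulf_eq0 (negbTE w0) (negbTE sw0).
set t := tF w in t0 ht *; set N := nF w in N0 hv *.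
set eps := N / t ^+ 2.
have tt0 : t * t != 0 by rewrite mulf_neq0.
have e0 : eps != 0 by rewrite mulf_neq0 // invr_eq0 expf_neq0.
have heps : eps * (t * t) = N by rewrite /eps expr2 divfK.
have veps : v N = v eps + v t + v t by rewrite -heps vM // vM // addrA.
have ieps : inPow v 1 eps by rewrite /inPow (negbTE e0) /=; lia.
have [r hr] := hensel vM vU vC ieps.
have hTw : t%:A = w + sig w by rewrite hT.
have hNw : N%:A = w * sig w by rewrite hN.
set A := (t * r)%:A : L; set B := (t - t * r)%:A : L.
have hAB1 : A + B = w + sig w by rewrite /A /B -alg_add addrC subrK.
have hAB2 : A * B = w * sig w.
  rewrite /A /B -alg_mul -hNw -heps; congr (_%:A).
  have -> : eps = r - r ^+ 2 by rewrite -{1}hr; ring.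
  ring.
have key : (w - A) * (w - B) = 0.
  have -> : (w - A) * (w - B) = w * w - (A + B) * w + A * B by ring.
  by rewrite hAB1 hAB2; ring.
have [s hs] : exists s : F, w = s%:A.
  move: key => /eqP; rewrite mulf_eq0 !subr_eq0 => /orP [/eqP->|/eqP->].
    by exists (t * r).
  by exists (t - t * r).
have sw : sig w = w by rewrite hs hsA.
have htt : t * t = N * (1 + 1) * (1 + 1).
  apply: (@alg_inj _ L); rewrite !alg_mul !alg_add hTw hNw sw !scale1r; ring.
have v2 : 0 <= v (1 + 1).
  move: (vU 1 1 (oner_neq0 _) (oner_neq0 _) h2); rewrite (vone vM) orbb //.
have := congr1 v htt; rewrite vM // vM ?mulf_neq0 // vM //; lia.
Qed.
Unset Implicit Arguments.

Theorem lemma8p2 (F : fieldType) (v : F -> int) (p q : nat)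
    (L : fieldExtType F) (sig : L -> L) (nF tF : L -> F)
    (C : numClosedFieldType) (omega tau : F -> C) (c : int)
    (chi : L -> C) (I : (L -> C) -> C) (gamma : C)
    (pi : 'M[F]_2 -> (L -> C) -> (L -> C)) (n : nat) (Phi : L -> C) :
  is_pAdic_field v p q ->
  is_quad_ext sig nF tF ->
  unramified v nF ->
  omega_char nF omega ->
  add_char_conductor v tau c ->
  char_not_via_norm v nF chi ->
  haar_integral v nF I ->
  self_dual v nF tF tau I ->
  `|gamma| = 1 ->
  weil_rep v q sig nF tF omega tau chi I gamma pi ->
  (1 <= n)%N ->
  S_chi v nF chi Phi ->
  (forall k, in_Kn v n k -> pi k Phi = Phi) ->
  (forall x : L, Phi x != 0 -> inPowL v nF (ceil_half (c - n%:Z)) x) /\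
  (forall x y : L, inPowL v nF (c - ceil_half (c - n%:Z)) (x - y) -> Phi x = Phi y).
Proof.
move=> hF hq hur hom hc hchi hI hsd hg hW hn hS hfix.
case: hF => vM [vU [_ [vC [ch0 _]]]].
case: hq => _ [[hsD hsM hsA hss _] [hN hT]].
case: hc => htM hcond.
case: hW => [[hpres _ _] [[_ hhom] [hup hdiag hw]]].
case: hom => homM hom1 _ _.
have h2 : (1 + 1 : F) != 0 := ch0 2%N isT.
have v1 := vone vM.
have sw0 : forall x, x != 0 -> sig x != 0.
  by move=> x x0; apply: contra x0 => /eqP h; rewrite -(hss x) h (sig0 hsD).
have nF0 : forall x, x != 0 -> nF x != 0.
  move=> x x0; apply/negP => /eqP h; have := hN x; rewrite h scale0r => /eqP.
  by rewrite eq_sym mulf_eq0 (negbTE x0) (negbTE (sw0 _ x0)).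
have nFM : forall x y, nF (x * y) = nF x * nF y.
  by move=> x y; apply: (@alg_inj _ L); rewrite alg_mul !hN hsM; ring.
have nFs : forall x, nF (sig x) = nF x.
  by move=> x; apply: (@alg_inj _ L); rewrite !hN hss mulrC.
have tFD : forall x y, tF (x + y) = tF x + tF y.
  by move=> x y; apply: (@alg_inj _ L); rewrite alg_add !hT hsD; ring.
have tF0 : tF 0 = 0.
  by apply: (@alg_inj _ L); rewrite hT (sig0 hsD) addr0 scale0r.
have s1 : sig 1 = 1 by have := hsA 1; rewrite scale1r.
have nF1 : nF 1 = 1 by apply: (@alg_inj _ L); rewrite hN s1 mulr1 scale1r.
have Gp : forall a b c d, a * d - b * c = 1 -> in_Gplus nF (mx2 a b c d).
  move=> a b c' d h; rewrite /in_Gplus det_mx2 h; split; first exact: oner_neq0.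
  by exists 1; rewrite nF1 oner_neq0.
have i01 : inPow v 0 (1 : F) by rewrite /inPow v1 lexx orbT.
have Kup : forall u, inPow v n u -> in_Kn v n (mx2 1 u 0 1).
  move=> u hu; split.
  - apply: (mx2_entries (P := inPow v 0)) => //; try exact: inPow0.
    by apply: inPowW hu; lia.
  - by rewrite det_mx2 mulr0 subr0 mulr1 oner_neq0.
  - by rewrite det_mx2 mulr0 subr0 mulr1 v1.
  - move=> i j; rewrite mx2_sub1 subrr.
    by apply: (mx2_entries (P := inPow v n%:Z)) => //; exact: inPow0.
have Klo : forall u, inPow v n u -> in_Kn v n (mx2 1 0 u 1).
  move=> u hu; split.
  - apply: (mx2_entries (P := inPow v 0)) => //; try exact: inPow0.
    by apply: inPowW hu; lia.
  - by rewrite det_mx2 mul0r subr0 mulr1 oner_neq0.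
  - by rewrite det_mx2 mul0r subr0 mulr1 v1.
  - move=> i j; rewrite mx2_sub1 subrr.
    by apply: (mx2_entries (P := inPow v n%:Z)) => //; exact: inPow0.
have supp : forall Psi, S_chi v nF chi Psi ->
    (forall u, inPow v n u -> pi (mx2 1 u 0 1) Psi = Psi) ->
    forall z, Psi z != 0 -> z != 0 -> c - n%:Z <= v (nF z).
  move=> Psi hSP hfP z Pz z0.
  have N0 := nF0 z z0.
  suff : c <= n%:Z + v (nF z) by lia.
  apply: (proj1 (hcond (n%:Z + v (nF z)))) => y hy.
  have hu : inPow v n (y / nF z).
    rewrite /inPow; case: (eqVneq y 0) => [->|y0]; first by rewrite mul0r eqxx.
    have u0 : y / nF z != 0 by rewrite mulf_neq0 // invr_eq0.
    have : v y = v (y / nF z) + v (nF z) by rewrite -vM // divfK.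
    move: hy; rewrite /inPow (negbTE y0) (negbTE u0) /= => hy; lia.
  have := congr1 (fun f => f z) (hfP _ hu); rewrite hup //= divfK // => h.
  apply/eqP; rewrite -subr_eq0; apply/eqP; apply: (mulIf Pz).
  by rewrite mulrBl mul1r h subrr mul0r.
have ev : forall z, z != 0 -> exists j, v (nF z) = j * 2.
  by move=> z /hur /dvdzP.
split.
  move=> x Px; rewrite /inPowL; case: (eqVneq x 0) => //= x0.
  have := supp Phi hS (fun u hu => hfix _ (Kup u hu)) x Px x0.
  have [j hj] := ev x x0; rewrite hj /ceil_half; lia.
set w := mx2 0 1 (-1) 0 : 'M[F]_2.
have Gw : in_Gplus nF w by apply: Gp; ring.
set Psi := pi w Phi.
have SP : S_chi v nF chi Psi := hpres w Phi Gw hS.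
have fP : forall u, inPow v n u -> pi (mx2 1 u 0 1) Psi = Psi.
  move=> u hu; rewrite /Psi -hhom //; last by apply: Gp; ring.
  have -> : mx2 1 u 0 1 *m w = w *m mx2 1 0 (-u) 1.
    by rewrite /w !mx2M; congr mx2; ring.
  rewrite hhom //; last by apply: Gp; ring.
  by rewrite hfix //; apply: Klo; apply: inPowN.
have hwwm : w *m w = mx2 (-1) 0 0 (-1)^-1.
  by rewrite /w mx2M invrN1; congr mx2; ring.
have n1 : (-1 : F) != 0 by rewrite oppr_eq0 oner_eq0.
have om0 : omega (-1) != 0.
  have := homM (-1) (-1) n1 n1; rewrite mulrNN mulr1 hom1 => h.
  by apply/eqP => h0; move: h; rewrite h0 mul0r => /eqP; rewrite oner_eq0.
have key : forall x, omega (-1) * Phi (- x) = gamma * fourier tau tF I Psi (sig x).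
  move=> x; have h := hhom w w Phi Gw Gw hS.
  rewrite hwwm hdiag // -/Psi hw // in h.
  have := congr1 (fun f => f x) h => /=.
  by rewrite (vNone vM) oppr0 expr0z mulr1 scaleN1r.
move=> a b hab.
have fe : fourier tau tF I Psi (sig (-a)) = fourier tau tF I Psi (sig (-b)).
  rewrite /fourier; congr I; apply: functional_extensionality => z.
  case: (eqVneq (Psi z) 0) => [->|Pz]; first by rewrite !mul0r.
  congr (_ * _).
  have -> : sig (-b) = sig (-a) + sig (a - b) by rewrite -hsD; congr sig; ring.
  rewrite mulrDl tFD htM.
  suff -> : tau (tF (sig (a - b) * z)) = 1 by rewrite mulr1.
  apply: (proj2 (hcond c)) (lexx c) _ _.
  case: (eqVneq (a - b) 0) => [->|ab0]; first by rewrite (sig0 hsD) mul0r tF0 inPow0.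
  case: (eqVneq z 0) => [->|z0]; first by rewrite mulr0 tF0 inPow0.
  apply: (trace_val vM vU vC h2 hsD hsA hss hN hT).
    by rewrite mulf_neq0 // sw0.
  rewrite nFM nFs vM ?nF0 //.
  have := supp Psi SP fP z Pz z0.
  have [j hj] := ev z z0.
  move: hab; rewrite /inPowL (negbTE ab0) /= hj /ceil_half; lia.
apply: (mulfI om0).
have ka := key (-a); have kb := key (-b).
rewrite opprK in ka; rewrite opprK in kb.
by rewrite ka kb fe.
Qed.
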